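(* For every non-self-intersecting 4-periodic of the elliptic billiard, the product of its area $A$ and the area $A'$ of its outer polygon is $$A\,A'=8a^2b^2.$$
   Context: The elliptic billiard is $\mathcal{E}: x^2/a^2+y^2/b^2=1$, $a>b>0$. A non-self-intersecting 4-periodic is a quadrilateral $P_1P_2P_3P_4$ inscribed in $\mathcal{E}$ which is a closed billiard trajectory (at each vertex the normal to $\mathcal{E}$ bisects the angle between the two incident sides) with confocal elliptic caustic $x^2/a''^2+y^2/b''^2=1$, $a''=a^2/\sqrt{a^2+b^2}$, $b''=b^2/\sqrt{a^2+b^2}$; explicitly, for $P_1=(x_1,y_1)\in\mathcal{E}$: $P_2=\left(-\frac{a^4y_1}{\sqrt{b^6x_1^2+a^6y_1^2}},\frac{b^4x_1}{\sqrt{b^6x_1^2+a^6y_1^2}}\right)$, $P_3=-P_1$, $P_4=-P_2$. The outer polygon is the quadrilateral whose sides lie on the tangent lines to $\mathcal{E}$ at $P_1,\dots,P_4$ (vertex $P_i'$ is the intersection of the tangents at $P_i$ and $P_{i+1}$). *)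

(* Defs.v *)
From mathcomp Require Import all_boot all_order all_algebra.
Set Implicit Arguments. Unset Strict Implicit. Unset Printing Implicit Defensive.
Import Order.TTheory GRing.Theory Num.Theory.
Local Open Scope ring_scope.

Section Billiard.
Variable R : rcfType.
Implicit Types (a b : R) (P Q : R * R).

Definition on_ellipse a b P : Prop := P.1 ^+ 2 / a ^+ 2 + P.2 ^+ 2 / b ^+ 2 = 1.

(* second vertex of the non-self-intersecting 4-periodic starting at P1
   (explicit formula of the paper) *)
Definition per4_P2 a b P : R * R :=
  let d := Num.sqrt (b ^+ 6 * P.1 ^+ 2 + a ^+ 6 * P.2 ^+ 2) in
  (- (a ^+ 4 * P.2) / d, b ^+ 4 * P.1 / d).

Definition opp_pt P : R * R := (- P.1, - P.2).

Definition on_tangent a b P Q : Prop :=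
  Q.1 * P.1 / a ^+ 2 + Q.2 * P.2 / b ^+ 2 = 1.

Definition area4 (V1 V2 V3 V4 : R * R) : R :=
  `| (V1.1 * V2.2 - V2.1 * V1.2) + (V2.1 * V3.2 - V3.1 * V2.2)
   + (V3.1 * V4.2 - V4.1 * V3.2) + (V4.1 * V1.2 - V1.1 * V4.2) | / 2.

End Billiard.

(* Main.v *)
Require Import Defs.
From mathcomp Require Import all_boot all_order all_algebra.
From mathcomp Require Import ring lra.
Import Order.TTheory GRing.Theory Num.Theory.
Local Open Scope ring_scope.

Lemma inter_tan (R : rcfType) (a b x y x2 y2 D q1 q2 : R) :
  a != 0 -> b != 0 -> D = x*y2 - x2*y -> D != 0 ->
  q1*x/a^+2 + q2*y/b^+2 = 1 -> q1*x2/a^+2 + q2*y2/b^+2 = 1 ->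
  q1 = a^+2*(y2-y)/D /\ q2 = b^+2*(x-x2)/D.
Proof.
move=> an bn eD D0 h1 h2.
have a20 : a^+2 != 0 by rewrite expf_neq0.
have b20 : b^+2 != 0 by rewrite expf_neq0.
have h1' : q1*x*b^+2 + q2*y*a^+2 = a^+2*b^+2.
  have := congr1 (fun t => t * (a^+2*b^+2)) h1; rewrite mul1r => <-.
  by field; rewrite an bn.
have h2' : q1*x2*b^+2 + q2*y2*a^+2 = a^+2*b^+2.
  have := congr1 (fun t => t * (a^+2*b^+2)) h2; rewrite mul1r => <-.
  by field; rewrite an bn.
have e1 : b^+2*(q1*D - a^+2*(y2-y)) =
   y2*(q1*x*b^+2 + q2*y*a^+2 - a^+2*b^+2) - y*(q1*x2*b^+2 + q2*y2*a^+2 - a^+2*b^+2).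
  by rewrite eD; ring.
have e2 : a^+2*(q2*D - b^+2*(x-x2)) =
   x*(q1*x2*b^+2 + q2*y2*a^+2 - a^+2*b^+2) - x2*(q1*x*b^+2 + q2*y*a^+2 - a^+2*b^+2).
  by rewrite eD; ring.
rewrite h1' h2' !subrr !mulr0 subrr in e1 e2.
move/eqP: e1; rewrite mulf_eq0 (negbTE b20) /= subr_eq0 => /eqP e1.
move/eqP: e2; rewrite mulf_eq0 (negbTE a20) /= subr_eq0 => /eqP e2.
split.
  by apply: (mulIf D0); rewrite -e1 mulfVK.
by apply: (mulIf D0); rewrite -e2 mulfVK.
Qed.

Lemma pos_comb (R : rcfType) (p q u v : R) :
  0 < p -> 0 < q -> 0 <= u -> 0 <= v -> 0 < u + v -> 0 < p*u + q*v.
Proof.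
move=> hp hq hu hv huv.
have [u0|u0] := eqVneq u 0.
  by rewrite u0 mulr0 add0r; rewrite u0 add0r in huv; rewrite mulr_gt0.
have : 0 < u by rewrite lt_def u0.
move=> up; rewrite ltr_pwDl ?mulr_gt0 ?mulr_ge0 // ltW //.
Qed.

Theorem mainTheorem13 (R : rcfType) (a b : R) (P1 Q1 Q2 Q3 Q4 : R * R) :
  0 < b -> b < a ->
  on_ellipse a b P1 ->
  let P2 := per4_P2 a b P1 in
  let P3 := opp_pt P1 in
  let P4 := opp_pt P2 in
  (* Q_i is the vertex P_i' of the outer polygon: intersection of the
     tangents at P_i and P_{i+1} *)
  on_tangent a b P1 Q1 -> on_tangent a b P2 Q1 ->
  on_tangent a b P2 Q2 -> on_tangent a b P3 Q2 ->
  on_tangent a b P3 Q3 -> on_tangent a b P4 Q3 ->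
  on_tangent a b P4 Q4 -> on_tangent a b P1 Q4 ->
  area4 P1 P2 P3 P4 * area4 Q1 Q2 Q3 Q4 = 8 * a ^+ 2 * b ^+ 2.
Proof.
move=> b0 ba hE P2 P3 P4.
have a0 : 0 < a by lra.
have an : a != 0 by rewrite gt_eqF.
have bn : b != 0 by rewrite gt_eqF.
case: P1 hE @P2 @P3 @P4 => x y hE P2 P3 P4.
rewrite /on_ellipse /= in hE.
set d := Num.sqrt (b ^+ 6 * x ^+ 2 + a ^+ 6 * y ^+ 2).
have xy : 0 < x^+2 + y^+2.
  rewrite lt_def addr_ge0 ?sqr_ge0 // andbT.
  apply/eqP=> h.
  move/eqP: h; rewrite paddr_eq0 ?sqr_ge0 // => /andP[/eqP hx /eqP hy].
  by move: hE; rewrite hx hy !mul0r addr0 => /eqP; rewrite eq_sym oner_eq0.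
have hpos : 0 < b ^+ 6 * x ^+ 2 + a ^+ 6 * y ^+ 2.
  have ha6 : 0 < a^+6 by rewrite exprn_gt0.
  have hb6 : 0 < b^+6 by rewrite exprn_gt0.
  by apply: pos_comb; rewrite ?sqr_ge0.
have dp : 0 < d by rewrite sqrtr_gt0.
have dn : d != 0 by rewrite gt_eqF.
set x2 := - (a ^+ 4 * y) / d.
set y2 := b ^+ 4 * x / d.
have eP2 : P2 = (x2, y2) by [].
set D := x*y2 - x2*y.
have Dp : 0 < D.
  have -> : D = (b^+4 * x^+2 + a^+4*y^+2) / d by rewrite /D /x2 /y2; field.
  apply: divr_gt0 => //.
  have ha4 : 0 < a^+4 by rewrite exprn_gt0.
  have hb4 : 0 < b^+4 by rewrite exprn_gt0.
  by apply: pos_comb; rewrite ?sqr_ge0.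
have Dn : D != 0 by rewrite gt_eqF.
case: Q1 Q2 Q3 Q4 => [q11 q12] [q21 q22] [q31 q32] [q41 q42].
rewrite /on_tangent /P4 /P3 eP2 /opp_pt /=.
move=> t1 t2 t3 t4 t5 t6 t7 t8.
have [e11 e12] := @inter_tan _ a b x y x2 y2 D q11 q12 an bn (erefl D) Dn t1 t2.
have [e21 e22] := @inter_tan _ a b x2 y2 (-x) (-y) D q21 q22 an bn
   ltac:(rewrite /D; ring) Dn t3 t4.
have [e31 e32] := @inter_tan _ a b (-x) (-y) (-x2) (-y2) D q31 q32 an bn
   ltac:(rewrite /D; ring) Dn t5 t6.
have [e41 e42] := @inter_tan _ a b (-x2) (-y2) x y D q41 q42 an bn
   ltac:(rewrite /D; ring) Dn t7 t8.
rewrite /area4 /= e11 e12 e21 e22 e31 e32 e41 e42.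
have -> : x * y2 - x2 * y + (x2 * - y - - x * y2) + (- x * - y2 - - x2 * - y) +
    (- x2 * y - x * - y2) = 4 * D by rewrite /D; ring.
have -> : (a ^+ 2 * (y2 - y) / D * (b ^+ 2 * (x2 - - x) / D) -
   a ^+ 2 * (- y - y2) / D * (b ^+ 2 * (x - x2) / D) +
   (a ^+ 2 * (- y - y2) / D * (b ^+ 2 * (- x - - x2) / D) -
    a ^+ 2 * (- y2 - - y) / D * (b ^+ 2 * (x2 - - x) / D)) +
   (a ^+ 2 * (- y2 - - y) / D * (b ^+ 2 * (- x2 - x) / D) -
    a ^+ 2 * (y - - y2) / D * (b ^+ 2 * (- x - - x2) / D)) +
   (a ^+ 2 * (y - - y2) / D * (b ^+ 2 * (x - x2) / D) -
    a ^+ 2 * (y2 - y) / D * (b ^+ 2 * (- x2 - x) / D))) = 8 * a^+2 * b^+2 / D.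
  by apply/eqP; rewrite -subr_eq0; apply/eqP; rewrite /D; field; rewrite -/D.
have g1 : 0 <= 4 * D by rewrite mulr_ge0 // ltW.
have g2 : 0 <= 8 * a^+2 * b^+2 / D.
  by apply: divr_ge0 (ltW Dp); apply: mulr_ge0; [apply: mulr_ge0|]; rewrite ?sqr_ge0 ?ler0n.
rewrite (ger0_norm g1) (ger0_norm g2).
by field.
Qed.
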